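(* Fix a prompt $q$, $\beta>0$, $\varepsilon>0$, and assume $1-\rho^+(q)-\rho^-(q)>0$ and $0<p_{\mathrm{ref}}(q)<1$. Let $(\pi_k)_{k\ge0}$ be policies such that, for each $k\ge1$, $\pi_k(\cdot\mid q)$ maximizes over all distributions $\pi(\cdot\mid q)$ on $\mathcal O$ the noisy regularized objective \[ \frac{(1-\rho^+(q)-\rho^-(q))\,\bigl(p_\pi(q)-p_{\pi_{k-1}}(q)\bigr)}{\sqrt{\mu_{\pi_{k-1}}(q)(1-\mu_{\pi_{k-1}}(q))+\varepsilon}}-\beta\,\mathrm{KL}\bigl(\pi(\cdot\mid q)\,\|\,\pi_{\mathrm{ref}}(\cdot\mid q)\bigr). \] Then $p_{\pi_k}(q)>p_{\mathrm{ref}}(q)$ for all $k\ge1$.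
   Context: Setting: $\mathcal O$ is a countable set of responses; $r^*:\mathcal Q\times\mathcal O\to\{0,1\}$ is the true binary reward; a policy gives a distribution $\pi(\cdot\mid q)$ on $\mathcal O$; $p_\pi(q)=\mathbb E_{o\sim\pi(\cdot\mid q)}[r^*(q,o)]$. $\pi_{\mathrm{ref}}$ is a fixed reference policy and $p_{\mathrm{ref}}(q)=p_{\pi_{\mathrm{ref}}}(q)$. Flip rates $\rho^+(q),\rho^-(q)\in[0,1]$ are the probabilities that a true reward $0$ is observed as $1$, respectively a true reward $1$ is observed as $0$; $\mu_{\pi}(q)=\rho^+(q)+(1-\rho^+(q)-\rho^-(q))\,p_{\pi}(q)$. $\mathrm{KL}$ is the Kullback–Leibler divergence. *)

(* Defs.v *)
From HB Require Import structures.
From mathcomp Require Import all_boot all_order all_algebra.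
From mathcomp Require Import all_classical all_reals all_analysis.
Set Implicit Arguments. Unset Strict Implicit. Unset Printing Implicit Defensive.
Import Order.TTheory GRing.Theory Num.Theory.
Local Open Scope classical_set_scope.
Local Open Scope ring_scope.

Section Defs.
Variables (R : realType) (O : countType).

Definition is_dist (pi : O -> R) : Prop :=
  (forall o, 0 <= pi o) /\ (\esum_(o in [set: O]) (pi o)%:E = 1)%E.

(** p_pi = E_{o ~ pi}[r(o)] for a binary reward r (terms are nonnegative
    and the sum is at most 1, hence finite). *)
Definition succ_prob (r : O -> bool) (pi : O -> R) : R :=
  fine (\esum_(o in [set: O]) ((pi o * (r o)%:R)%:E)).

Definition kl_term (pi ref : O -> R) (o : O) : \bar R :=
  if pi o == 0 then 0%E
  else if ref o == 0 then +oo%E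
  else (pi o * ln (pi o / ref o))%:E.

(** KL(pi || ref) = sum of positive parts - sum of negative parts
    (the negative part is always finite, so this is well defined in \bar R). *)
Definition KL (pi ref : O -> R) : \bar R :=
  (\esum_(o in [set: O]) maxe (kl_term pi ref o) 0%E
   - \esum_(o in [set: O]) maxe (- kl_term pi ref o) 0%E)%E.

Definition noisy_mean (rp rm p : R) : R := rp + (1 - rp - rm) * p.

Definition noisy_objective (rp rm eps beta : R) (r : O -> bool)
    (pi_prev pi ref : O -> R) : \bar R :=
  let pprev := succ_prob r pi_prev in
  let mu := noisy_mean rp rm pprev in
  (((1 - rp - rm) * (succ_prob r pi - pprev)
      / Num.sqrt (mu * (1 - mu) + eps))%:E
   - beta%:E * KL pi ref)%E.

End Defs.

(* Main.v *)
Require Import Defs.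
From HB Require Import structures.
From mathcomp Require Import all_boot all_order all_algebra.
From mathcomp Require Import all_classical all_reals all_analysis.
From mathcomp Require Import ring lra.
Import Order.TTheory GRing.Theory Num.Theory.
Local Open Scope ring_scope.
Local Open Scope classical_set_scope.
Section S.
Variables (R : realType) (O : countType).
Lemma ln_le_sub1 (x : R) : 0 < x -> ln x <= x - 1.
Proof.
move=> x0; have := expR_ge1Dx (ln x); rewrite lnK ?posrE //; lra.
Qed.

Lemma kl_cases (pi ref : O -> R) o : 0 <= pi o -> 0 <= ref o ->
  kl_term pi ref o = +oo%E \/ exists y, kl_term pi ref o = y%:E /\ pi o - ref o <= y.
Proof.
move=> p0 r0; rewrite /kl_term; case: eqP => [->|/eqP pn0].
  by right; exists 0; split => //; lra.
case: eqP => [_|/eqP rn0]; first by left.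
right; eexists; split; first reflexivity.
have pp : 0 < pi o by rewrite lt0r pn0.
have rp : 0 < ref o by rewrite lt0r rn0.
have -> : pi o / ref o = (ref o / pi o)^-1 by rewrite invf_div.
rewrite lnV ?posrE ?divr_gt0 //.
have h := @ln_le_sub1 _ (divr_gt0 rp pp).
have : pi o * (1 - ref o / pi o) <= pi o * - ln (ref o / pi o).
  by apply: ler_wpM2l; [exact: ltW | lra].
suff -> : pi o * (1 - ref o / pi o) = pi o - ref o by [].
by field; rewrite gt_eqF.
Qed.

Lemma gibbs (pi ref : O -> R) : is_dist pi -> is_dist ref -> (0 <= KL pi ref)%E.
Proof.
move=> [p0 p1] [r0 r1]; rewrite /KL.
set A := esum _ _; set B := esum _ _.
have maxge0 : forall x : \bar R, (0 <= maxe x 0)%E by move=> x; rewrite le_max lexx orbT.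
have hB : (B <= 1)%E.
  rewrite -r1; apply: le_esum => o _.
  case: (@kl_cases pi ref o (p0 o) (r0 o)) => [->|[y [-> hy]]].
    by rewrite /= max_r ?lee_fin //; rewrite leNye.
  rewrite -EFinN -EFin_max lee_fin; rewrite ge_max; apply/andP; split => //.
  by have := p0 o; lra.
have Bfin : B \is a fin_num.
  by rewrite ge0_fin_numE ?esum_ge0 // (le_lt_trans hB) // ltry.
have hAB : (A + 1 >= 1 + B)%E.
  rewrite -{1}p1 -{1}r1 -!esumD //; try by move=> o _; rewrite ?lee_fin.
  apply: le_esum => o _.
  case: (@kl_cases pi ref o (p0 o) (r0 o)) => [->|[y [-> hy]]].
    by rewrite [maxe +oo%E _]max_l ?leey // addye // leey.
  rewrite -EFinN -!EFin_max -!EFinD lee_fin.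
  have := p0 o; have := r0 o.
  rewrite /Num.max; case: ifP; case: ifP => ? ? ? ?; lra.
rewrite suber_ge0 //.
by move: hAB; rewrite addeC leeD2lE.
Qed.
Lemma esumZ_le (c : R) (a : O -> \bar R) : 0 <= c -> (forall o, 0 <= a o)%E ->
  (\esum_(o in [set: O]) (c%:E * a o) <= c%:E * \esum_(o in [set: O]) a o)%E.
Proof.
move=> c0 a0; apply: ge_ereal_sup => _ [X [finX _]] <-.
rewrite -ge0_mule_fsumr //; apply: lee_wpmul2l; first by rewrite lee_fin.
by apply: ereal_sup_ubound; exists X.
Qed.

Lemma esumZ (c : R) (a : O -> \bar R) : 0 <= c -> (forall o, 0 <= a o)%E ->
  (\esum_(o in [set: O]) (c%:E * a o) = c%:E * \esum_(o in [set: O]) a o)%E.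
Proof.
move=> c0 a0; have [->|cne0] := eqVneq c 0.
  by rewrite mul0e esum1 // => o _; rewrite mul0e.
have cp : 0 < c by rewrite lt0r cne0.
apply/eqP; rewrite eq_le esumZ_le //=.
have -> : (\esum_(o in [set: O]) a o = \esum_(o in [set: O]) (c^-1%:E * (c%:E * a o)))%E.
  apply: eq_esum => o _; rewrite muleA -EFinM mulVf // mul1e //.
have h := esumZ_le (c^-1) (fun o => c%:E * a o)%E.
have h2 := h ltac:(by rewrite invr_ge0) ltac:(by move=> o; rewrite mule_ge0 // lee_fin).
apply: (le_trans (lee_wpmul2l _ h2)); first by rewrite lee_fin.
by rewrite muleA -EFinM divff // mul1e.
Qed.
Lemma fin01 (x : \bar R) : (0 <= x)%E -> (x <= 1)%E -> x = (fine x)%:E /\ 0 <= fine x <= 1.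
Proof.
move=> x0 x1.
have xf : x \is a fin_num by rewrite ge0_fin_numE // (le_lt_trans x1) // ltry.
split; first by rewrite fineK.
by apply/andP; split; rewrite -lee_fin fineK.
Qed.

Lemma dist_split (ref : O -> R) (r : O -> bool) : is_dist ref ->
  (\esum_(o in [set: O]) (ref o * (r o)%:R)%:E = (succ_prob r ref)%:E)%E /\
  (\esum_(o in [set: O]) (ref o * (1 - (r o)%:R))%:E = (1 - succ_prob r ref)%:E)%E /\
  0 <= succ_prob r ref <= 1.
Proof.
move=> [r0 r1].
have g1 : forall o, (0 <= (ref o * (r o)%:R)%:E)%E.
  by move=> o; rewrite lee_fin; case: (r o); rewrite /= ?mulr1 ?mulr0.
have g2 : forall o, (0 <= (ref o * (1 - (r o)%:R))%:E)%E.
  by move=> o; rewrite lee_fin; case: (r o); rewrite /= ?subrr ?mulr0 ?subr0 ?mulr1.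
have hs : (\esum_(o in [set: O]) (ref o * (r o)%:R)%:E + \esum_(o in [set: O]) (ref o * (1 - (r o)%:R))%:E = 1)%E.
  rewrite -r1 -esumD //; apply: eq_esum => o _; rewrite -EFinD; congr EFin; ring.
have [e1 h1] := @fin01 _ (esum_ge0 (S:=[set: O]) (fun o _ => g1 o)) ltac:(by rewrite -hs leeDl // esum_ge0).
have [e2 h2] := @fin01 _ (esum_ge0 (S:=[set: O]) (fun o _ => g2 o)) ltac:(by rewrite -hs leeDr // esum_ge0).
rewrite /succ_prob -e1; split => //; split => //.
move: hs; rewrite e1 e2 -EFinD => -[hs]; rewrite e2; congr EFin; lra.
Qed.

Lemma tilt (ref : O -> R) (r : O -> bool) (t : R) : is_dist ref ->
  0 < succ_prob r ref < 1 -> 0 < t < 1 ->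
  let p := succ_prob r ref in let a := 1 + t * (1 - p) / p in let b := 1 - t in
  let sigma := fun o => ref o * (if r o then a else b) in
  [/\ is_dist sigma, succ_prob r sigma = a * p &
      KL sigma ref = (a * ln a * p + b * ln b * (1 - p))%:E].
Proof.
move=> hd /andP[p0 p1] /andP[t0 t1] p a b sigma.
have r0 := hd.1.
have [E1 [E2 _]] := @dist_split ref r hd. rewrite -/p in E1 E2 p0 p1.
have a1 : 1 <= a.
  rewrite /a lerDl; apply: divr_ge0; last exact: ltW.
  by apply: mulr_ge0; rewrite ?subr_ge0 ltW.
have a0 : 0 < a by lra.
have b0 : 0 < b by rewrite /b; lra.
have b1 : b <= 1 by rewrite /b; lra.
have s0 : forall o, 0 <= sigma o.
  by move=> o; rewrite /sigma; case: (r o); apply: mulr_ge0 => //; lra.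
have g1 : forall o, (0 <= (ref o * (r o)%:R)%:E)%E.
  by move=> o; rewrite lee_fin; case: (r o); rewrite /= ?mulr1 ?mulr0.
have g2 : forall o, (0 <= (ref o * (1 - (r o)%:R))%:E)%E.
  by move=> o; rewrite lee_fin; case: (r o); rewrite /= ?subrr ?mulr0 ?subr0 ?mulr1.
have sig_r : forall o, ((sigma o * (r o)%:R)%:E = a%:E * (ref o * (r o)%:R)%:E)%E.
  by move=> o; rewrite -EFinM /sigma; case: (r o); congr EFin => /=; ring.
have succ : succ_prob r sigma = a * p.
  by rewrite /succ_prob (eq_esum (fun o _ => sig_r o)) esumZ ?E1 //; exact: ltW.
split => //.
  split => //.
  rewrite (eq_esum (fun o _ => (_ : (sigma o)%:E = a%:E * (ref o * (r o)%:R)%:E + b%:E * (ref o * (1 - (r o)%:R))%:E)%E)); last first.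
    by move=> o _; rewrite -!EFinM -EFinD /sigma; case: (r o); congr EFin => /=; ring.
  rewrite esumD; last 2 first.
  - by move=> o _; apply: mule_ge0 => //; rewrite lee_fin; lra.
  - by move=> o _; apply: mule_ge0 => //; rewrite lee_fin; lra.
  rewrite !esumZ ?E1 ?E2 //; try exact: ltW.
  rewrite -!EFinM -EFinD; congr EFin; rewrite /a /b; field; lra.
have kl : forall o, kl_term sigma ref o =
    (ref o * (if r o then a * ln a else b * ln b))%:E.
  move=> o; rewrite /kl_term.
  have [e|rn0] := eqVneq (ref o) 0.
    by rewrite /sigma e !mul0r eqxx.
  have rp : 0 < ref o by rewrite lt0r rn0 r0.
  have sn0 : sigma o != 0.
    by rewrite /sigma; case: (r o); rewrite mulf_neq0 // gt_eqF.
  have e : sigma o / ref o = (if r o then a else b) by rewrite /sigma mulrAC mulfV // mul1r.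
  rewrite (negbTE sn0) e /sigma.
  by case: (r o) => /=; congr EFin; ring.
have la : 0 <= a * ln a by apply: mulr_ge0; [lra | exact: ln_ge0].
have lb : b * ln b <= 0.
  by rewrite mulr_ge0_le0 ?ln_le0 //; lra.
have eA : (\esum_(o in [set: O]) maxe (kl_term sigma ref o) 0 =
    \esum_(o in [set: O]) ((a * ln a)%:E * (ref o * (r o)%:R)%:E))%E.
  apply: eq_esum => o _; rewrite kl -EFinM -EFin_max; congr EFin.
  have := r0 o; case: (r o) => /= ?; rewrite /Num.max; case: ifP => ?; nra.
have eB : (\esum_(o in [set: O]) maxe (- kl_term sigma ref o) 0 =
    \esum_(o in [set: O]) ((- (b * ln b))%:E * (ref o * (1 - (r o)%:R))%:E))%E.
  apply: eq_esum => o _; rewrite kl -EFinN -EFinM -EFin_max; congr EFin.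
  have := r0 o; case: (r o) => /= ?; rewrite /Num.max; case: ifP => ?; nra.
rewrite /KL eA eB.
rewrite esumZ // E1 esumZ ?E2 //; last by rewrite oppr_ge0.
by rewrite -!EFinM -EFinB; congr EFin; ring.
Qed.
End S.

Theorem proposition2 (R : realType) (Q : Type) (O : countType)
    (rstar : Q -> O -> bool)
    (rho_plus rho_minus : Q -> R)
    (pi_ref : Q -> O -> R) (pi : nat -> Q -> O -> R)
    (q : Q) (beta eps : R) :
  (forall q', 0 <= rho_plus q' <= 1) ->
  (forall q', 0 <= rho_minus q' <= 1) ->
  (forall q', is_dist (pi_ref q')) ->
  (forall k q', is_dist (pi k q')) ->
  0 < beta -> 0 < eps ->
  0 < 1 - rho_plus q - rho_minus q ->
  0 < succ_prob (rstar q) (pi_ref q) < 1 ->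
  (forall k, (1 <= k)%N ->
     forall sigma : O -> R, is_dist sigma ->
       (noisy_objective (rho_plus q) (rho_minus q) eps beta (rstar q)
          (pi k.-1 q) sigma (pi_ref q)
        <= noisy_objective (rho_plus q) (rho_minus q) eps beta (rstar q)
          (pi k.-1 q) (pi k q) (pi_ref q))%E) ->
  forall k, (1 <= k)%N ->
    succ_prob (rstar q) (pi_ref q) < succ_prob (rstar q) (pi k q).
Proof.
move=> Hrp Hrm Hrefd Hpid beta0 eps0 d0 Hp Hopt k k1.
set p := succ_prob (rstar q) (pi_ref q) in Hp *.
set pk := succ_prob (rstar q) (pi k q).
have [_ [_ hprev]] := @dist_split R O (pi k.-1 q) (rstar q) (Hpid k.-1 q).
set pprev := succ_prob (rstar q) (pi k.-1 q) in hprev.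
set d := 1 - rho_plus q - rho_minus q in d0.
set mu := noisy_mean (rho_plus q) (rho_minus q) pprev.
have mu01 : 0 <= mu <= 1.
  have := Hrp q; have := Hrm q; rewrite /mu /noisy_mean -/d.
  move=> /andP[? ?] /andP[? ?]; move/andP: hprev => [? ?].
  have dd : d = 1 - rho_plus q - rho_minus q by [].
  have h1 : 0 <= d * pprev by apply: mulr_ge0; lra.
  have h2 : d * pprev <= d by rewrite ler_piMr //; lra.
  apply/andP; split; lra.
set s := Num.sqrt (mu * (1 - mu) + eps).
have s0 : 0 < s by rewrite sqrtr_gt0; move/andP: mu01 => [? ?]; nra.
set c := d / s.
have c0 : 0 < c by rewrite divr_gt0.
set t := c * p / (c * p + beta).
have [p0 p1] : 0 < p /\ p < 1 by move/andP: Hp.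
have cp0 : 0 < c * p by rewrite mulr_gt0.
have t0 : 0 < t by rewrite divr_gt0 // addr_gt0.
have t1 : t < 1 by rewrite ltr_pdivrMr ?addr_gt0 //; lra.
have [sd sp skl] := @tilt R O (pi_ref q) (rstar q) t (Hrefd q) Hp ltac:(by apply/andP).
rewrite -/p in sd sp skl.
set a := 1 + t * (1 - p) / p in sd sp skl.
set b := 1 - t in sd sp skl.
have H := Hopt k k1 _ sd.
have KLk := @gibbs R O _ _ (Hpid k q) (Hrefd q).
rewrite /noisy_objective -/pprev -/mu -/s sp skl -/p in H.
rewrite -!EFinM -EFinB in H.
move: H KLk; case: (KL (pi k q) (pi_ref q)) => [kk| |] H KLk; last first.
- by move: KLk; rewrite leeNy_eq.
- by move: H; rewrite muleC gt0_mulye ?lte_fin // addeNy leeNy_eq.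
rewrite -EFinM -EFinB lee_fin in H; rewrite lee_fin in KLk.
rewrite -/d -/pk in H.
have sn0 : s != 0 by rewrite gt_eqF.
have e1 : forall x, d * (x - pprev) / s = c * x - c * pprev.
  by move=> x; rewrite /c; field.
rewrite !e1 in H.
have pn0 : p != 0 by rewrite gt_eqF.
have a1 : 1 <= a.
  rewrite /a lerDl; apply: divr_ge0; last exact: ltW.
  by apply: mulr_ge0; rewrite ?subr_ge0 ltW.
have a0 : 0 < a by lra.
have b0 : 0 < b by rewrite /b; lra.
have ha : a * ln a <= a * (a - 1) by rewrite ler_wpM2l ?ln_le_sub1 //; lra.
have hb : b * ln b <= b * (b - 1) by rewrite ler_wpM2l ?ln_le_sub1 //; lra.
have ha' : a * ln a * p <= a * (a - 1) * p by rewrite ler_wpM2r //; lra.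
have hb' : b * ln b * (1 - p) <= b * (b - 1) * (1 - p) by rewrite ler_wpM2r //; lra.
have eK : a * (a - 1) * p + b * (b - 1) * (1 - p) = t ^+ 2 * (1 - p) / p.
  by rewrite /a /b; field.
have Kb : a * ln a * p + b * ln b * (1 - p) <= t ^+ 2 * (1 - p) / p by lra.
have Kb' : beta * (a * ln a * p + b * ln b * (1 - p)) <= beta * (t ^+ 2 * (1 - p) / p).
  by rewrite ler_wpM2l //; lra.
have bk : 0 <= beta * kk by apply: mulr_ge0; lra.
have cpb : c * p + beta != 0 by rewrite gt_eqF // addr_gt0.
have gap : c * (a * p) - beta * (t ^+ 2 * (1 - p) / p) - c * p
    = t * (1 - p) * (c ^+ 2 * p / (c * p + beta)).
  by rewrite /a /t; field; rewrite cpb pn0.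
have gpos : 0 < t * (1 - p) * (c ^+ 2 * p / (c * p + beta)).
  apply: mulr_gt0; first by apply: mulr_gt0; lra.
  by apply: divr_gt0; [apply: mulr_gt0 => //; exact: exprn_gt0 | exact: addr_gt0].
rewrite -(ltr_pM2l c0); lra.
Qed.
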